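(* Let $G$ be a non-abelian subgroup of $\mathcal{H}(n,\mathbb{C})$ with $\Lambda_G\not\subset\mathbb{R}$ and $G\not\subset\mathcal{SR}_n$, and let $U=\mathbb{C}^n\setminus E_G$. The following are equivalent: (1) $G$ has a dense orbit in $\mathbb{C}^n$; (2) every orbit $G(z)$ with $z\in U$ is dense in $\mathbb{C}^n$; (3) either $E_G=\mathbb{C}^n$, or $\dim_{\mathbb{C}}E_G=n-1$ and $\overline{\Lambda_G}=\mathbb{C}$.
   Context: $\mathcal{H}(n,\mathbb{C})$ is the group of all maps $z\mapsto\lambda z+b$ of $\mathbb{C}^n$ with $\lambda\in\mathbb{C}^*$, $b\in\mathbb{C}^n$ ($\lambda$ = ratio); $\mathcal{T}_n$ = translations; every element of $\mathcal{H}(n,\mathbb{C})\setminus\mathcal{T}_n$ has a unique fixed point, its center. $H_2=(\frac{\pi}{2}+\pi\mathbb{Z})\cup\pi\mathbb{Z}$, $F_2=\{e^{ix}:x\in H_2\}$, $H_3=(\frac{\pi}{3}+\pi\mathbb{Z})\cup(-\frac{\pi}{3}+\pi\mathbb{Z})\cup\pi\mathbb{Z}$, $F_3=\{e^{ix}:x\in H_3\}$; $\mathcal{S}_i\mathcal{R}_n=\{z\mapsto\lambda z+b:\lambda\in F_i, b\in\mathbb{C}^n\}$, $\mathcal{SR}_n=\mathcal{S}_2\mathcal{R}_n\cup\mathcal{S}_3\mathcal{R}_n$. For a subgroup $G$: $G(z)$ is the orbit; $\Lambda_G$ the set of ratios of elements of $G$, $\overline{\Lambda_G}$ its closure in $\mathbb{C}$;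 $\Gamma_G$ the set of centers of elements of $G\setminus\mathcal{T}_n$; $E_G$ the smallest complex affine subspace of $\mathbb{C}^n$ containing $\Gamma_G$. *)

(* Defs.v *)
From Stdlib Require Import Reals ZArith.
Open Scope R_scope.

Definition C := (R * R)%type.
Definition C0 : C := (0, 0).
Definition C1 : C := (1, 0).
Definition Cadd (z w : C) : C := (fst z + fst w, snd z + snd w).
Definition Copp (z : C) : C := (- fst z, - snd z).
Definition Csub (z w : C) : C := Cadd z (Copp w).
Definition Cmul (z w : C) : C :=
  (fst z * fst w - snd z * snd w, fst z * snd w + snd z * fst w).
Definition Cinv (z : C) : C :=
  (fst z / (fst z ^ 2 + snd z ^ 2), - snd z / (fst z ^ 2 + snd z ^ 2)).
Definition Cnorm (z : C) : R := sqrt (fst z ^ 2 + snd z ^ 2).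
Definition Cexpi (x : R) : C := (cos x, sin x).

Definition idx (n : nat) := {i : nat | (i < n)%nat}.
Definition vec (n : nat) := idx n -> C.
Definition vzero {n} : vec n := fun _ => C0.
Definition vadd {n} (z w : vec n) : vec n := fun i => Cadd (z i) (w i).
Definition vscale {n} (a : C) (z : vec n) : vec n := fun i => Cmul a (z i).
Fixpoint vlin {n} (k : nat) (c : nat -> C) (v : nat -> vec n) : vec n :=
  match k with
  | O => vzero
  | S k' => vadd (vlin k' c v) (vscale (c k') (v k'))
  end.

(** Elements of H(n,C): z |-> lambda z + b, encoded by (lambda, b). *)
Record aff (n : nat) := mkaff { ratio : C; trans : vec n }.
Arguments mkaff {n}. Arguments ratio {n}. Arguments trans {n}.
Definition apply {n} (f : aff n) (z : vec n) : vec n :=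
  vadd (vscale (ratio f) z) (trans f).
Definition acomp {n} (f g : aff n) : aff n :=
  mkaff (Cmul (ratio f) (ratio g)) (vadd (vscale (ratio f) (trans g)) (trans f)).
Definition ainv {n} (f : aff n) : aff n :=
  mkaff (Cinv (ratio f)) (vscale (Copp (Cinv (ratio f))) (trans f)).
Definition aid {n} : aff n := mkaff C1 vzero.

Definition is_subgroup {n} (G : aff n -> Prop) : Prop :=
  (forall f, G f -> ratio f <> C0) /\ G aid /\
  (forall f g, G f -> G g -> G (acomp f g)) /\
  (forall f, G f -> G (ainv f)).

Definition nonabelian {n} (G : aff n -> Prop) : Prop :=
  exists f g, G f /\ G g /\ acomp f g <> acomp g f.

Definition Lambda {n} (G : aff n -> Prop) (l : C) : Prop :=
  exists f, G f /\ ratio f = l.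
Definition Lambda_subset_R {n} (G : aff n -> Prop) : Prop :=
  forall l, Lambda G l -> snd l = 0.
Definition closure_Lambda_is_C {n} (G : aff n -> Prop) : Prop :=
  forall w : C, forall eps, eps > 0 ->
    exists l, Lambda G l /\ Cnorm (Csub l w) < eps.

Definition H2 (x : R) : Prop :=
  exists k : Z, x = PI / 2 + PI * IZR k \/ x = PI * IZR k.
Definition F2 (l : C) : Prop := exists x, H2 x /\ l = Cexpi x.
Definition H3 (x : R) : Prop :=
  exists k : Z, x = PI / 3 + PI * IZR k \/ x = - (PI / 3) + PI * IZR k
               \/ x = PI * IZR k.
Definition F3 (l : C) : Prop := exists x, H3 x /\ l = Cexpi x.
Definition in_SR {n} (f : aff n) : Prop := F2 (ratio f) \/ F3 (ratio f).
Definition subset_SR {n} (G : aff n -> Prop) : Prop :=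
  forall f, G f -> in_SR f.

Definition Gamma {n} (G : aff n -> Prop) (c : vec n) : Prop :=
  exists f, G f /\ ratio f <> C1 /\ apply f c = c.

Definition is_affine_subspace {n} (A : vec n -> Prop) : Prop :=
  forall x y t, A x -> A y ->
    A (vadd (vscale (Csub C1 t) x) (vscale t y)).
Definition E_G {n} (G : aff n -> Prop) (z : vec n) : Prop :=
  forall A : vec n -> Prop, is_affine_subspace A ->
    (forall c, Gamma G c -> A c) -> A z.

Definition lin_indep {n} (k : nat) (v : nat -> vec n) : Prop :=
  forall c : nat -> C, vlin k c v = vzero -> forall i, (i < k)%nat -> c i = C0.
Definition affine_dim {n} (E : vec n -> Prop) (k : nat) : Prop :=
  exists (p0 : vec n) (v : nat -> vec n), lin_indep k v /\
    forall z, E z <-> exists c : nat -> C, z = vadd p0 (vlin k c v).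

Definition dense_orbit {n} (G : aff n -> Prop) (z : vec n) : Prop :=
  forall (w : vec n) eps, eps > 0 ->
    exists f, G f /\ forall i, Cnorm (Csub (apply f z i) (w i)) < eps.
Definition has_dense_orbit {n} (G : aff n -> Prop) : Prop :=
  exists z, dense_orbit G z.

(* Main.v *)
From Pilot Require Import Defs.
From Stdlib Require Import Reals ZArith Lra Lia Classical ClassicalEpsilon FunctionalExtensionality ProofIrrelevance.
Import Pilot.Defs.
Open Scope R_scope.

Lemma Ceq (z w : C) : fst z = fst w -> snd z = snd w -> z = w.
Proof. destruct z, w; simpl; intros -> ->; reflexivity. Qed.

Ltac cgoal := apply Ceq; unfold Csub, Cadd, Copp, Cmul, Cinv, C0, C1; simpl.
Ltac sidecond := match goal with H : ?a <> 0 |- ?b <> 0 => let Hc := fresh in intro Hc; apply H; transitivity b; [unfold Csub, Cadd, Copp, Cmul, Cinv, C0, C1; simpl; ring | exact Hc] end.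
Ltac cfield := cgoal; field; try sidecond.
Ltac vgoal := apply functional_extensionality; intro; unfold apply, vadd, vscale, vzero; simpl; cgoal.

Definition m2 (z : C) : R := fst z ^ 2 + snd z ^ 2.
Definition N1 (z : C) : R := Rabs (fst z) + Rabs (snd z).

Lemma m2_nonneg z : 0 <= m2 z.
Proof. unfold m2; nra. Qed.
Lemma m2_zero z : m2 z = 0 -> z = C0.
Proof. unfold m2; destruct z as [a b]; simpl; intro H.
  assert (a = 0) by nra. assert (b = 0) by nra. subst; reflexivity. Qed.
Lemma m2_pos z : z <> C0 -> 0 < m2 z.
Proof. intro H. destruct (m2_nonneg z) as [h|h]; auto. exfalso; apply H, m2_zero; auto. Qed.
Lemma m2_mul z w : m2 (Cmul z w) = m2 z * m2 w.
Proof. unfold m2, Cmul; simpl; ring. Qed.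
Lemma Cmul_neq0 z w : z <> C0 -> w <> C0 -> Cmul z w <> C0.
Proof. intros Hz Hw H. assert (h := m2_mul z w). rewrite H in h.
  unfold m2 at 1 in h; simpl in h. pose proof (m2_pos z Hz); pose proof (m2_pos w Hw). nra. Qed.
Lemma den_neq0 z : z <> C0 -> fst z ^ 2 + snd z ^ 2 <> 0.
Proof. intro H; pose proof (m2_pos z H); unfold m2 in *; lra. Qed.

Lemma Cmul_inv_r z : z <> C0 -> Cmul z (Cinv z) = C1.
Proof. intro H; pose proof (den_neq0 z H); cfield. Qed.
Lemma Cmul_inv_l z : z <> C0 -> Cmul (Cinv z) z = C1.
Proof. intro H; pose proof (den_neq0 z H); cfield. Qed.
Lemma Cinv_C1 : Cinv C1 = C1.
Proof. cgoal; field. Qed.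
Lemma Cinv_neq0 z : z <> C0 -> Cinv z <> C0.
Proof. intros H H'. pose proof (Cmul_inv_r z H). rewrite H' in H0.
  unfold Cmul, C0, C1 in H0; simpl in H0. injection H0; lra. Qed.

Lemma N1_nonneg z : 0 <= N1 z.
Proof. unfold N1; pose proof (Rabs_pos (fst z)); pose proof (Rabs_pos (snd z)); lra. Qed.
Lemma N1_add z w : N1 (Cadd z w) <= N1 z + N1 w.
Proof. unfold N1, Cadd; simpl.
  pose proof (Rabs_triang (fst z) (fst w)); pose proof (Rabs_triang (snd z) (snd w)); lra. Qed.
Lemma N1_mul z w : N1 (Cmul z w) <= N1 z * N1 w.
Proof. unfold N1, Cmul; simpl.
  pose proof (Rabs_triang (fst z * fst w) (- (snd z * snd w))).
  pose proof (Rabs_triang (fst z * snd w) (snd z * fst w)).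
  rewrite Rabs_Ropp in H. rewrite !Rabs_mult in H, H0.
  unfold Rminus. nra. Qed.
Lemma N1_opp z : N1 (Copp z) = N1 z.
Proof. unfold N1, Copp; simpl; rewrite !Rabs_Ropp; auto. Qed.
Lemma Rabs_le_sqrt a b : Rabs a <= sqrt (a ^ 2 + b ^ 2).
Proof. rewrite <- sqrt_Rsqr_abs. apply sqrt_le_1_alt. unfold Rsqr; nra. Qed.
Lemma Cnorm_le_N1 z : Cnorm z <= N1 z.
Proof. unfold Cnorm, N1. destruct z as [a b]; cbn [fst snd].
  pose proof (Rabs_pos a); pose proof (Rabs_pos b).
  rewrite <- (sqrt_Rsqr (Rabs a + Rabs b)) by lra. apply sqrt_le_1_alt.
  rewrite <- (pow2_abs a), <- (pow2_abs b). unfold Rsqr. nra. Qed.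
Lemma N1_le_Cnorm z : N1 z <= 2 * Cnorm z.
Proof. unfold N1, Cnorm. pose proof (Rabs_le_sqrt (fst z) (snd z)).
  pose proof (Rabs_le_sqrt (snd z) (fst z)). replace (snd z ^ 2 + fst z ^ 2) with (fst z ^ 2 + snd z ^ 2) in H0 by ring. lra. Qed.
Lemma Cnorm_mul z w : Cnorm (Cmul z w) = Cnorm z * Cnorm w.
Proof. unfold Cnorm. rewrite <- sqrt_mult by nra. f_equal. unfold Cmul; simpl; ring. Qed.
Lemma Cnorm_pos z : z <> C0 -> 0 < Cnorm z.
Proof. intro H; unfold Cnorm; apply sqrt_lt_R0; pose proof (m2_pos z H); unfold m2 in *; lra. Qed.
Lemma N1_real a : N1 (a, 0) = Rabs a.
Proof. unfold N1; simpl; rewrite Rabs_R0; ring. Qed.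

Lemma sq_cases s a : s ^ 2 = a ^ 2 -> s = a \/ s = - a.
Proof. intro H. assert ((s - a) * (s + a) = 0) by nra. apply Rmult_integral in H0. destruct H0; [left|right]; lra. Qed.

Lemma cos_m1 x : cos (x + PI * IZR (-1)) = - cos x.
Proof. pose proof (neg_cos (x + PI * IZR (-1))). replace (x + PI * IZR (-1) + PI) with x in H by ring. lra. Qed.
Lemma sin_m1 x : sin (x + PI * IZR (-1)) = - sin x.
Proof. pose proof (neg_sin (x + PI * IZR (-1))). replace (x + PI * IZR (-1) + PI) with x in H by ring. lra. Qed.
Lemma cos_p1 x : cos (x + PI * IZR 1) = - cos x.
Proof. replace (x + PI * IZR 1) with (x + PI) by (simpl; ring). apply neg_cos. Qed.
Lemma sin_p1 x : sin (x + PI * IZR 1) = - sin x.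
Proof. replace (x + PI * IZR 1) with (x + PI) by (simpl; ring). apply neg_sin. Qed.

Lemma sqrt3sq : (sqrt 3 / 2) ^ 2 = 3 / 4.
Proof. pose proof (sqrt_sqrt 3). replace ((sqrt 3 / 2) ^ 2) with (sqrt 3 * sqrt 3 / 4) by field. rewrite H; lra. Qed.

Lemma SR_of_int c s k : c ^ 2 + s ^ 2 = 1 -> 2 * c = IZR k -> F2 (c, s) \/ F3 (c, s).
Proof.
  intros H1 H2.
  assert (Hk : (-2 <= k <= 2)%Z).
  { assert (-2 <= IZR k <= 2) by nra. destruct H. split; [apply le_IZR|apply le_IZR]; auto. }
  assert (Hpi2 : 0 <= sqrt 3 / 2). { pose proof (sqrt_pos 3); lra. }
  assert (k = -2 \/ k = -1 \/ k = 0 \/ k = 1 \/ k = 2)%Z as Hc by lia.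
  destruct Hc as [ -> | [ -> | [ -> | [ -> | -> ] ] ] ].
  - left. exists (PI * IZR 1). split. exists 1%Z; right; auto.
    assert (s = 0) by nra. subst s. replace (PI * IZR 1) with PI by (simpl; ring).
    apply Ceq; unfold Cexpi; cbn [fst snd]; rewrite ?cos_PI, ?sin_PI; lra.
  - right. assert (s ^ 2 = (sqrt 3 / 2) ^ 2) by (rewrite sqrt3sq; nra).
    destruct (sq_cases _ _ H) as [ -> | -> ].
    + exists (- (PI / 3) + PI * IZR 1). split. exists 1%Z; right; left; auto.
      apply Ceq; unfold Cexpi; cbn [fst snd]; rewrite ?cos_p1, ?sin_p1, ?cos_neg, ?sin_neg, ?cos_PI3, ?sin_PI3; lra.
    + exists (PI / 3 + PI * IZR (-1)). split. exists (-1)%Z; left; auto.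
      apply Ceq; unfold Cexpi; cbn [fst snd]; rewrite ?cos_m1, ?sin_m1, ?cos_PI3, ?sin_PI3; lra.
  - left. assert (s ^ 2 = 1 ^ 2) by nra.
    destruct (sq_cases _ _ H) as [ -> | -> ].
    + exists (PI / 2 + PI * IZR 0). split. exists 0%Z; left; auto.
      replace (PI / 2 + PI * IZR 0) with (PI / 2) by (simpl; ring).
      apply Ceq; unfold Cexpi; cbn [fst snd]; rewrite ?cos_PI2, ?sin_PI2; lra.
    + exists (PI / 2 + PI * IZR (-1)). split. exists (-1)%Z; left; auto.
      apply Ceq; unfold Cexpi; cbn [fst snd]; rewrite ?cos_m1, ?sin_m1, ?cos_PI2, ?sin_PI2; lra.
  - right. assert (s ^ 2 = (sqrt 3 / 2) ^ 2) by (rewrite sqrt3sq; nra).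
    destruct (sq_cases _ _ H) as [ -> | -> ].
    + exists (PI / 3 + PI * IZR 0). split. exists 0%Z; left; auto.
      replace (PI / 3 + PI * IZR 0) with (PI / 3) by (simpl; ring).
      apply Ceq; unfold Cexpi; cbn [fst snd]; rewrite ?cos_PI3, ?sin_PI3; lra.
    + exists (- (PI / 3) + PI * IZR 0). split. exists 0%Z; right; left; auto.
      replace (- (PI / 3) + PI * IZR 0) with (- (PI / 3)) by (simpl; ring).
      apply Ceq; unfold Cexpi; cbn [fst snd]; rewrite ?cos_neg, ?sin_neg, ?cos_PI3, ?sin_PI3; lra.
  - left. exists (PI * IZR 0). split. exists 0%Z; right; auto.
    assert (s = 0) by nra. subst s. replace (PI * IZR 0) with 0 by (simpl; ring).
    apply Ceq; unfold Cexpi; cbn [fst snd]; rewrite ?cos_0, ?sin_0; lra.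
Qed.

Definition LA_full := forall n (v : nat -> vec n), lin_indep n v -> forall w, exists c, w = vlin n c v.
Definition LA_basis := forall n (D : vec n -> Prop), D vzero ->
  (forall x y, D x -> D y -> D (vadd x y)) -> (forall a x, D x -> D (vscale a x)) ->
  exists k (v : nat -> vec n), (k <= n)%nat /\ lin_indep k v /\ (forall j, (j < k)%nat -> D (v j)) /\
    (forall x, D x -> exists c, x = vlin k c v).
Definition LA_annih := forall n k (v : nat -> vec n), (k < n)%nat ->
  exists L : vec n -> C, (forall x y, L (vadd x y) = Cadd (L x) (L y)) /\
    (forall a x, L (vscale a x) = Cmul a (L x)) /\ (forall j, (j < k)%nat -> L (v j) = C0) /\
    (exists y, L y = C1) /\
    (exists K, 0 <= K /\ forall w e, (forall i, N1 (w i) <= e) -> N1 (L w) <= K * e).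

Lemma vlin_ext n k c c' (v v' : nat -> vec n) : (forall j, (j < k)%nat -> c j = c' j /\ v j = v' j) ->
  vlin k c v = vlin k c' v'.
Proof. induction k; intro H; simpl; auto. destruct (H k) as [h1 h2]; [lia|]. rewrite h1, h2, IHk; [auto|intros j hj; apply H; lia]. Qed.
Lemma vlin_zero n k (v : nat -> vec n) : vlin k (fun _ => C0) v = vzero.
Proof. induction k; simpl; auto. rewrite IHk. vgoal; ring. Qed.
Lemma vlin_in n (D : vec n -> Prop) k c v : D vzero ->
  (forall x y, D x -> D y -> D (vadd x y)) -> (forall a x, D x -> D (vscale a x)) ->
  (forall j, (j < k)%nat -> D (v j)) -> D (vlin k c v).
Proof. intros H0 Ha Hs Hv; induction k; simpl; auto. apply Ha. apply IHk; intros; apply Hv; lia.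
  apply Hs, Hv; lia. Qed.
Lemma L_zero n (L : vec n -> C) : (forall a x, L (vscale a x) = Cmul a (L x)) -> L vzero = C0.
Proof. intro Hs. replace (@vzero n) with (vscale C0 (@vzero n)) by (vgoal; ring). rewrite Hs. cgoal; ring. Qed.
Lemma L_vlin n (L : vec n -> C) k c v : (forall x y, L (vadd x y) = Cadd (L x) (L y)) ->
  (forall a x, L (vscale a x) = Cmul a (L x)) -> (forall j, (j < k)%nat -> L (v j) = C0) ->
  L (vlin k c v) = C0.
Proof. intros Ha Hs Hv; induction k; simpl. apply L_zero; auto.
  rewrite Ha, Hs, IHk, Hv by (intros; try apply Hv; lia). cgoal; ring. Qed.
Lemma vlin_scale n k a c (v : nat -> vec n) : vlin k (fun j => Cmul a (c j)) v = vscale a (vlin k c v).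
Proof. induction k; simpl. vgoal; ring. rewrite IHk. vgoal; ring. Qed.

Lemma vec0_eq (x y : vec 0) : x = y.
Proof. apply functional_extensionality; intros [j hj]; lia. Qed.

Lemma solve_lin a X U : a <> C0 -> Cadd X (Cmul a U) = C0 -> U = Cmul (Copp (Cinv a)) X.
Proof. intros Ha h. assert (X = Copp (Cmul a U)).
  { pose proof (f_equal fst h); pose proof (f_equal snd h). unfold Cadd, Cmul, C0 in *; simpl in *. cgoal; lra. }
  subst X. pose proof (den_neq0 _ Ha). cfield. Qed.

Lemma LA_span (Hf : LA_full) n (v : nat -> vec n) u : lin_indep (n - 1) v ->
  ~ (exists c, u = vlin (n - 1) c v) -> forall w, exists c mu, w = vadd (vlin (n - 1) c v) (vscale mu u).
Proof.
  intros Hi Hu w. destruct n as [|m].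
  { exfalso; apply Hu. exists (fun _ => C0). apply vec0_eq. }
  replace (S m - 1)%nat with m in * by lia.
  set (v' := fun j => if Nat.eqb j m then u else v j).
  assert (Hext : forall c, vlin m c v' = vlin m c v).
  { intro c; apply vlin_ext; intros j hj; split; auto. unfold v'.
    destruct (Nat.eqb_spec j m); [lia|auto]. }
  assert (Hv'm : v' m = u) by (unfold v'; rewrite Nat.eqb_refl; auto).
  assert (Hi' : lin_indep (S m) v').
  { intros c Hc. simpl in Hc. rewrite Hext, Hv'm in Hc.
    destruct (classic (c m = C0)) as [hm|hm].
    - rewrite hm in Hc. replace (vscale C0 u) with (@vzero (S m)) in Hc by (vgoal; ring).
      replace (vadd (vlin m c v) vzero) with (vlin m c v) in Hc by (vgoal; ring).
      intros i hi. destruct (Nat.eq_dec i m) as [->|hne]; auto. apply Hi; auto; lia.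
    - exfalso; apply Hu. exists (fun j => Cmul (Copp (Cinv (c m))) (c j)).
      rewrite vlin_scale.
      apply functional_extensionality; intro i. pose proof (f_equal (fun x => x i) Hc) as h.
      unfold vadd, vscale, vzero in *. cbv beta in h. apply solve_lin; auto. }
  destruct (Hf (S m) v' Hi' w) as [c Hc]. exists c, (c m). rewrite Hc. simpl. rewrite Hext, Hv'm. auto.
Qed.

Section Grp.
Variable n : nat.
Variable G : aff n -> Prop.
Hypothesis HG : is_subgroup G.

Lemma G_nz f : G f -> ratio f <> C0.
Proof. destruct HG as [h _]; auto. Qed.
Lemma G_id : G aid.
Proof. destruct HG as [_ [h _]]; auto. Qed.
Lemma G_comp f g : G f -> G g -> G (acomp f g).
Proof. destruct HG as [_ [_ [h _]]]; auto. Qed.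
Lemma G_inv f : G f -> G (ainv f).
Proof. destruct HG as [_ [_ [_ h]]]; auto. Qed.

Definition Tr (b : vec n) : Prop := exists f, G f /\ ratio f = C1 /\ trans f = b.
Definition Mul (r : C) : Prop := forall t, Tr t -> Tr (vscale r t).

Lemma Tr_add a b : Tr a -> Tr b -> Tr (vadd a b).
Proof. intros [f [Gf [rf tf]]] [g [Gg [rg tg]]]. exists (acomp f g); split; [apply G_comp; auto|].
  simpl; rewrite rf, rg, tf, tg; split. cgoal; ring. vgoal; ring. Qed.

Lemma Tr_opp a : Tr a -> Tr (vscale (Copp C1) a).
Proof. intros [f [Gf [rf tf]]]. exists (ainv f); split; [apply G_inv; auto|].
  simpl; rewrite rf, tf, Cinv_C1; split; auto. Qed.

Lemma Tr_conj f a : G f -> Tr a -> Tr (vscale (ratio f) a).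
Proof. intros Gf [t [Gt [rt tt]]]. exists (acomp (acomp f t) (ainv f)).
  pose proof (den_neq0 _ (G_nz f Gf)) as Hd.
  split; [apply G_comp; [apply G_comp|apply G_inv]; auto|]. simpl; rewrite rt, tt. split.
  cfield. vgoal; field; sidecond. Qed.

Lemma Tr_zero : Tr vzero.
Proof. exists aid; split; [apply G_id|]; simpl; auto. Qed.

Lemma Cmul_ninv_cancel r X : r <> C0 -> Cmul r (Cmul (Copp (Cinv r)) X) = Copp X.
Proof. intro H; pose proof (den_neq0 r H); cfield. Qed.

Lemma Tr_comm f g : G f -> G g ->
  Tr (vadd (vscale (Csub (ratio f) C1) (trans g)) (vscale (Copp (Csub (ratio g) C1)) (trans f))).
Proof. intros Gf Gg. exists (acomp (acomp f g) (ainv (acomp g f))).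
  assert (Hgf : G (acomp g f)) by (apply G_comp; auto).
  pose proof (G_nz _ Hgf) as Hnz. simpl in Hnz.
  split; [apply G_comp; [apply G_comp|apply G_inv]; auto|]. simpl. split.
  - replace (Cmul (ratio f) (ratio g)) with (Cmul (ratio g) (ratio f)) by (cgoal; ring).
    apply Cmul_inv_r; auto.
  - apply functional_extensionality; intro i. unfold vadd, vscale.
    replace (Cmul (ratio f) (ratio g)) with (Cmul (ratio g) (ratio f)) by (cgoal; ring).
    rewrite Cmul_ninv_cancel by auto. cgoal; ring. Qed.

Lemma Mul_ratio f : G f -> Mul (ratio f).
Proof. intros Gf t Ht; apply Tr_conj; auto. Qed.
Lemma Mul_add r s : Mul r -> Mul s -> Mul (Cadd r s).
Proof. intros Hr Hs t Ht. replace (vscale (Cadd r s) t) with (vadd (vscale r t) (vscale s t)).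
  apply Tr_add; auto. vgoal; ring. Qed.
Lemma Mul_mul r s : Mul r -> Mul s -> Mul (Cmul r s).
Proof. intros Hr Hs t Ht. replace (vscale (Cmul r s) t) with (vscale r (vscale s t)).
  apply Hr, Hs, Ht. vgoal; ring. Qed.
Lemma Mul_one : Mul C1.
Proof. intros t Ht. replace (vscale C1 t) with t; auto. vgoal; ring. Qed.
Lemma Mul_m1 : Mul (Copp C1).
Proof. intros t Ht; apply Tr_opp; auto. Qed.
Lemma Mul_nat k : Mul (INR k, 0).
Proof. induction k.
  - intros t Ht. replace (vscale (INR 0, 0) t) with (@vzero n). apply Tr_zero. vgoal; simpl; ring.
  - replace (INR (S k), 0) with (Cadd (INR k, 0) C1). apply Mul_add; auto; apply Mul_one.
    rewrite S_INR; cgoal; ring. Qed.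
Lemma Mul_Z z : Mul (IZR z, 0).
Proof. destruct (Z_le_gt_dec 0 z) as [h|h].
  - rewrite <- (Z2Nat.id z h), <- INR_IZR_INZ. apply Mul_nat.
  - replace (IZR z, 0) with (Cmul (Copp C1) (INR (Z.to_nat (- z)), 0)).
    apply Mul_mul; [apply Mul_m1|apply Mul_nat].
    rewrite INR_IZR_INZ, Z2Nat.id by lia. rewrite opp_IZR. cgoal; ring. Qed.


Fixpoint Cpow (x : C) (k : nat) : C := match k with O => C1 | S k' => Cmul x (Cpow x k') end.
Lemma m2_pow x k : m2 (Cpow x k) = m2 x ^ k.
Proof. induction k; simpl. unfold m2, C1; simpl; ring. rewrite m2_mul, IHk; ring. Qed.
Lemma N1_sq z : N1 z ^ 2 <= 2 * m2 z.
Proof. unfold N1, m2. rewrite <- (pow2_abs (fst z)), <- (pow2_abs (snd z)).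
  pose proof (pow2_ge_0 (Rabs (fst z) - Rabs (snd z))). nra. Qed.

Lemma up_bounds a : 0 <= IZR (up a) - a <= 1.
Proof. destruct (archimed a); lra. Qed.

Lemma DensC (P : C -> Prop)
  (Hadd : forall r s, P r -> P s -> P (Cadd r s))
  (Hmul : forall r s, P r -> P s -> P (Cmul r s))
  (HZ : forall z, P (IZR z, 0)) x mu :
  P x -> P mu -> 0 < m2 x < 1 -> snd mu <> 0 ->
  forall w eps, 0 < eps -> exists r, P r /\ N1 (Csub r w) < eps.
Proof.
  intros Px Pmu Hx Hmu w eps Heps.
  set (K := 1 + N1 mu). assert (HK : 0 < K) by (pose proof (N1_nonneg mu); unfold K; lra).
  assert (HeK : 0 < eps / K) by (apply Rdiv_lt_0_compat; auto).
  assert (Hd : 0 < (eps / K) ^ 2 / 2) by nra.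
  destruct (pow_lt_1_zero (m2 x)) with (y := (eps / K) ^ 2 / 2) as [N HN]; auto.
  { rewrite Rabs_pos_eq; lra. }
  specialize (HN N (le_n N)). set (y := Cpow x N).
  assert (Py : P y).
  { unfold y; clear HN; induction N; simpl. replace C1 with (IZR 1, 0) by reflexivity. apply HZ.
    apply Hmul; auto. }
  assert (Hmy : m2 y = m2 x ^ N) by apply m2_pow.
  assert (Hmy0 : 0 < m2 y) by (rewrite Hmy; apply pow_lt; lra).
  assert (Hy0 : y <> C0) by (intro h; rewrite h in Hmy0; unfold m2, C0 in Hmy0; simpl in Hmy0; lra).
  assert (HNy : N1 y < eps / K).
  { pose proof (N1_sq y). rewrite Rabs_pos_eq in HN by lra. pose proof (N1_nonneg y). nra. }
  set (q := Cmul w (Cinv y)). set (b := snd q / snd mu). set (a := fst q - b * fst mu).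
  set (d := Cadd (IZR (up a) - a, 0) (Cmul (IZR (up b) - b, 0) mu)).
  exists (Cmul y (Cadd (IZR (up a), 0) (Cmul (IZR (up b), 0) mu))). split.
  { apply Hmul; auto. }
  assert (Hw : w = Cmul y q).
  { unfold q. pose proof (den_neq0 _ Hy0). cfield. }
  assert (Heq : Csub (Cmul y (Cadd (IZR (up a), 0) (Cmul (IZR (up b), 0) mu))) w = Cmul y d).
  { rewrite Hw. unfold d, a, b. cgoal; field; (split; [intro hc; apply (den_neq0 y Hy0); rewrite <- hc; ring | auto]). }
  rewrite Heq.
  assert (HNd : N1 d <= K).
  { unfold d, K. eapply Rle_trans; [apply N1_add|].
    eapply Rle_trans; [apply Rplus_le_compat_l, N1_mul|].
    rewrite !N1_real. pose proof (up_bounds a); pose proof (up_bounds b).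
    rewrite !Rabs_pos_eq by lra. pose proof (N1_nonneg mu). nra. }
  eapply Rle_lt_trans; [apply N1_mul|].
  pose proof (N1_nonneg y); pose proof (N1_nonneg d).
  apply Rle_lt_trans with (N1 y * K). apply Rmult_le_compat_l; auto.
  replace eps with (eps / K * K) by (field; lra). apply Rmult_lt_compat_r; auto.
Qed.

Lemma m2_inv z : z <> C0 -> m2 (Cinv z) = / m2 z.
Proof. intro H. pose proof (m2_pos z H). pose proof (m2_mul (Cinv z) z).
  rewrite Cmul_inv_l in H1 by auto. unfold m2 at 1 in H1; simpl in H1.
  apply (Rmult_eq_reg_r (m2 z)); [|lra]. rewrite <- H1. field; lra. Qed.

Lemma Mul_dense_hyp : ~ Lambda_subset_R G -> ~ subset_SR G ->
  forall w eps, 0 < eps -> exists r, Mul r /\ N1 (Csub r w) < eps.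
Proof.
  intros HL HS w eps Heps.
  assert (exists mu, Mul mu /\ snd mu <> 0) as [mu [Pmu Hmu]].
  { apply NNPP; intro h; apply HL; intros l [f [Gf <-]].
    apply NNPP; intro h2; apply h; exists (ratio f); split; auto; apply Mul_ratio; auto. }
  assert (exists f, G f /\ ~ in_SR f) as [f [Gf Hf]].
  { apply NNPP; intro h; apply HS; intros f Gf; apply NNPP; intro h2; apply h; exists f; auto. }
  assert (Hgen : forall x, Mul x -> 0 < m2 x < 1 -> exists r, Mul r /\ N1 (Csub r w) < eps).
  { intros x Px Hx. apply (DensC Mul Mul_add Mul_mul Mul_Z x mu); auto. }
  pose proof (G_nz f Gf) as Hnz. pose proof (m2_pos _ Hnz) as Hpos.
  destruct (Rtotal_order (m2 (ratio f)) 1) as [Hlt|[Heq|Hgt]].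
  - apply (Hgen (ratio f)); auto. apply Mul_ratio; auto.
  - destruct (ratio f) as [c s] eqn:Er. unfold m2 in Heq; simpl in Heq.
    set (u := up (2 * c)).
    set (x := Cadd (Cadd (c, s) (Cinv (c, s))) (IZR (- u), 0)).
    assert (Px : Mul x).
    { apply Mul_add; [apply Mul_add|apply Mul_Z].
      rewrite <- Er; apply Mul_ratio; auto.
      replace (Cinv (c, s)) with (ratio (ainv f)) by (simpl; rewrite Er; auto). apply Mul_ratio, G_inv; auto. }
    assert (Hx : x = (2 * c - IZR u, 0)).
    { unfold x. rewrite opp_IZR. unfold Cinv; simpl; rewrite Heq. cgoal; field. }
    pose proof (up_bounds (2 * c)) as Hb. fold u in Hb.
    destruct (Req_dec (2 * c - IZR u) 0) as [h0|h0].
    + exfalso; apply Hf. unfold in_SR; rewrite Er. apply (SR_of_int c s u); auto. lra.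
    + destruct (Req_dec (2 * c - IZR u) (-1)) as [h1|h1].
      * exfalso; apply Hf. unfold in_SR; rewrite Er. apply (SR_of_int c s (u - 1)); auto.
        rewrite minus_IZR; simpl; lra.
      * apply (Hgen x Px). rewrite Hx; unfold m2; simpl. split; nra.
  - apply (Hgen (Cinv (ratio f))).
    + replace (Cinv (ratio f)) with (ratio (ainv f)) by reflexivity. apply Mul_ratio, G_inv; auto.
    + rewrite m2_inv by auto. split. apply Rinv_0_lt_compat; lra.
      rewrite <- Rinv_1. apply Rinv_lt_contravar; lra.
Qed.

Definition vsub (x y : vec n) : vec n := vadd x (vscale (Copp C1) y).

Inductive Sp : vec n -> Prop :=
| Sp0 : Sp vzero
| SpS x a t : Sp x -> Tr t -> Sp (vadd x (vscale a t)).

Lemma Sp_add x y : Sp x -> Sp y -> Sp (vadd x y).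
Proof. intros Hx Hy; induction Hy.
  - replace (vadd x vzero) with x by (vgoal; ring). auto.
  - replace (vadd x (vadd x0 (vscale a t))) with (vadd (vadd x x0) (vscale a t)) by (vgoal; ring).
    constructor; auto. Qed.
Lemma Sp_scale a x : Sp x -> Sp (vscale a x).
Proof. intro Hx; induction Hx.
  - replace (vscale a vzero) with (@vzero n) by (vgoal; ring). constructor.
  - replace (vscale a (vadd x (vscale a0 t))) with (vadd (vscale a x) (vscale (Cmul a a0) t)) by (vgoal; ring).
    constructor; auto. Qed.
Lemma Sp_Tr a t : Tr t -> Sp (vscale a t).
Proof. intro H. replace (vscale a t) with (vadd vzero (vscale a t)) by (vgoal; ring). constructor; auto. constructor. Qed.
Lemma Sp_sub x y : Sp x -> Sp y -> Sp (vsub x y).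
Proof. intros; unfold vsub; apply Sp_add; auto; apply Sp_scale; auto. Qed.

Definition vnat (v : vec n) (j : nat) : C :=
  match lt_dec j n with left h => v (exist _ j h) | right _ => C0 end.
Fixpoint fsum (f : nat -> R) (k : nat) : R := match k with O => 0 | S k => fsum f k + f k end.
Lemma fsum_nonneg f k : (forall j, 0 <= f j) -> 0 <= fsum f k.
Proof. intro H; induction k; simpl; [lra|]. pose proof (H k); lra. Qed.
Lemma fsum_ge f k j : (forall j, 0 <= f j) -> (j < k)%nat -> f j <= fsum f k.
Proof. intros H; induction k; intro hj; [lia|]. simpl. destruct (Nat.eq_dec j k) as [->|hne].
  pose proof (fsum_nonneg f k H); lra. pose proof (IHk ltac:(lia)); pose proof (H k); lra. Qed.

Lemma vbound (v : vec n) : exists K, 0 < K /\ forall i, N1 (v i) <= K.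
Proof. exists (1 + fsum (fun j => N1 (vnat v j)) n). split.
  pose proof (fsum_nonneg (fun j => N1 (vnat v j)) n (fun j => N1_nonneg _)); lra.
  intros [j hj]. pose proof (fsum_ge (fun j => N1 (vnat v j)) n j (fun j => N1_nonneg _) hj).
  cbv beta in H. unfold vnat at 1 in H. destruct (lt_dec j n) as [h|h]; [|lia].
  replace (exist (fun i : nat => (i < n)%nat) j hj) with (exist (fun i : nat => (i < n)%nat) j h)
    by (f_equal; apply proof_irrelevance). lra. Qed.

Lemma Tr_dense_Sp : (forall w eps, 0 < eps -> exists r, Mul r /\ N1 (Csub r w) < eps) ->
  forall s, Sp s -> forall eps, 0 < eps -> exists t, Tr t /\ forall i, N1 (Csub (t i) (s i)) < eps.
Proof.
  intros HM s Hs; induction Hs; intros eps Heps.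
  - exists vzero; split; [apply Tr_zero|]. intro i; unfold vzero, N1, Csub, Cadd, Copp, C0; simpl.
    rewrite Ropp_0, Rplus_0_r, Rabs_R0; lra.
  - destruct (IHHs (eps / 2)) as [t1 [Ht1 He1]]; [lra|].
    destruct (vbound t) as [K [HK HbK]].
    destruct (HM a (eps / (2 * K))) as [r [Hr Hra]]. apply Rdiv_lt_0_compat; lra.
    exists (vadd t1 (vscale r t)). split. apply Tr_add; auto.
    intro i. unfold vadd, vscale.
    replace (Csub (Cadd (t1 i) (Cmul r (t i))) (Cadd (x i) (Cmul a (t i))))
      with (Cadd (Csub (t1 i) (x i)) (Cmul (Csub r a) (t i))) by (cgoal; ring).
    eapply Rle_lt_trans; [apply N1_add|]. eapply Rle_lt_trans; [apply Rplus_le_compat_l, N1_mul|].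
    specialize (He1 i); specialize (HbK i). pose proof (N1_nonneg (Csub r a)).
    assert (Hb : N1 (Csub r a) * N1 (t i) <= eps / (2 * K) * K).
    { apply Rmult_le_compat; auto. apply N1_nonneg. lra. }
    replace (eps / (2 * K) * K) with (eps / 2) in Hb by (field; apply Rgt_not_eq; lra). lra.
Qed.

Lemma apply_acomp (f g : aff n) (y : vec n) : apply (acomp f g) y = apply f (apply g y).
Proof. vgoal; ring. Qed.
Lemma apply_ainv_l (f : aff n) (y : vec n) : ratio f <> C0 -> apply (ainv f) (apply f y) = y.
Proof. intro H; pose proof (den_neq0 _ H). vgoal; field; sidecond. Qed.

Lemma Csub_neq0 a b : a <> b -> Csub a b <> C0.
Proof. intros H h; apply H. unfold Csub, Cadd, Copp, C0 in h. injection h; intros.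
  apply Ceq; lra. Qed.

Lemma nontrans : nonabelian G -> exists f, G f /\ ratio f <> C1.
Proof. intros [f [g [Gf [Gg Hfg]]]]. apply NNPP; intro h. apply Hfg.
  assert (rf : ratio f = C1) by (apply NNPP; intro h'; apply h; exists f; auto).
  assert (rg : ratio g = C1) by (apply NNPP; intro h'; apply h; exists g; auto).
  destruct f as [lf bf], g as [lg bg]; simpl in *; subst. unfold acomp; simpl. f_equal. vgoal; ring. Qed.

Lemma E_aff : is_affine_subspace (E_G G).
Proof. intros x y t Hx Hy A HA HG'. apply HA; [apply Hx|apply Hy]; auto. Qed.
Lemma Gamma_E (c : vec n) : Gamma G c -> E_G G c.
Proof. intros Hc A HA HG'; auto. Qed.

Lemma E_inv (f : aff n) (x : vec n) : G f -> E_G G x -> E_G G (apply f x).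
Proof.
  intros Gf Hx A HA HGa. apply (Hx (fun y => A (apply f y))).
  - intros y1 y2 t h1 h2.
    replace (apply f (vadd (vscale (Csub C1 t) y1) (vscale t y2)))
      with (vadd (vscale (Csub C1 t) (apply f y1)) (vscale t (apply f y2))) by (vgoal; ring).
    apply HA; auto.
  - intros c [g [Gg [Hg Hc]]]. apply HGa. exists (acomp (acomp f g) (ainv f)). split.
    apply G_comp; [apply G_comp|apply G_inv]; auto. split.
    + simpl. pose proof (den_neq0 _ (G_nz f Gf)).
      replace (Cmul (Cmul (ratio f) (ratio g)) (Cinv (ratio f))) with (ratio g) by cfield. auto.
    + rewrite !apply_acomp, apply_ainv_l by (apply G_nz; auto). rewrite Hc; auto.
Qed.

Lemma trans_fix (g : aff n) (c : vec n) : apply g c = c -> forall i, trans g i = Csub (c i) (Cmul (ratio g) (c i)).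
Proof. intros H i. pose proof (f_equal (fun v => v i) H) as h. simpl in h. unfold apply, vadd, vscale in h.
  pose proof (f_equal fst h); pose proof (f_equal snd h). cgoal; simpl in *; lra. Qed.

Lemma E_sub_S (f0 : aff n) (c0 : vec n) : G f0 -> ratio f0 <> C1 -> apply f0 c0 = c0 ->
  forall x, E_G G x -> Sp (vsub x c0).
Proof.
  intros Gf0 Hf0 Hc0 x Hx. apply (Hx (fun y => Sp (vsub y c0))).
  - intros y1 y2 t h1 h2.
    replace (vsub (vadd (vscale (Csub C1 t) y1) (vscale t y2)) c0)
      with (vadd (vscale (Csub C1 t) (vsub y1 c0)) (vscale t (vsub y2 c0))) by (unfold vsub; vgoal; ring).
    apply Sp_add; apply Sp_scale; auto.
  - intros c [g [Gg [Hg Hc]]].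
    pose proof (Tr_comm f0 g Gf0 Gg) as Ht.
    set (kap := Cmul (Csub (ratio f0) C1) (Csub C1 (ratio g))).
    assert (Hk : kap <> C0).
    { apply Cmul_neq0; apply Csub_neq0; auto. }
    pose proof (den_neq0 _ Hk) as Hd.
    replace (vsub c c0) with (vscale (Cinv kap)
      (vadd (vscale (Csub (ratio f0) C1) (trans g)) (vscale (Copp (Csub (ratio g) C1)) (trans f0)))).
    apply Sp_Tr; auto.
    apply functional_extensionality; intro i. unfold vsub, vadd, vscale.
    rewrite (trans_fix g c Hc i), (trans_fix f0 c0 Hc0 i). unfold kap in *.
    cgoal; field; sidecond.
Qed.

Lemma center_exists : nonabelian G ->
  exists f0 c0, G f0 /\ ratio f0 <> C1 /\ apply f0 c0 = c0.
Proof. intro Hna. destruct (nontrans Hna) as [f0 [Gf0 Hf0]].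
  exists f0, (vscale (Cinv (Csub C1 (ratio f0))) (trans f0)). split; auto; split; auto.
  assert (h : Csub C1 (ratio f0) <> C0) by (apply Csub_neq0; auto).
  pose proof (den_neq0 _ h). vgoal; field; sidecond. Qed.

Lemma vsub_eq (x y : vec n) i : vsub x y i = Csub (x i) (y i).
Proof. unfold vsub, vadd, vscale; cgoal; ring. Qed.

Section Lin.
Variable L : vec n -> C.
Hypothesis Ladd : forall x y, L (vadd x y) = Cadd (L x) (L y).
Hypothesis Lsc : forall a x, L (vscale a x) = Cmul a (L x).
Variable K : R.
Hypothesis HK : 0 <= K.
Hypothesis LK : forall w e, (forall i, N1 (w i) <= e) -> N1 (L w) <= K * e.

Lemma L_sub x y : L (vsub x y) = Csub (L x) (L y).
Proof. unfold vsub; rewrite Ladd, Lsc; cgoal; ring. Qed.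

Lemma L_near (a w : vec n) d : (forall i, Cnorm (Csub (a i) (w i)) < d) -> N1 (L (vsub a w)) <= K * (2 * d).
Proof. intro H; apply LK; intro i; rewrite vsub_eq. pose proof (N1_le_Cnorm (Csub (a i) (w i))).
  pose proof (H i); lra. Qed.

Lemma FC (c0 z y : vec n) : dense_orbit G z -> L y = C1 ->
  (forall f, G f -> L (vsub (apply f z) c0) = Cmul (ratio f) (L (vsub z c0))) ->
  L (vsub z c0) = C0 -> False.
Proof.
  intros Hz Hy Hf H0.
  destruct (Hz (vadd c0 y) (1 / (4 * (K + 1)))) as [f [Gf Hc]].
  { apply Rdiv_lt_0_compat; lra. }
  pose proof (L_near _ _ _ Hc) as Hb.
  assert (E1 : L (vsub (apply f z) (vadd c0 y)) = Csub (L (vsub (apply f z) c0)) (L y)).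
  { rewrite <- L_sub. f_equal. unfold vsub; vgoal; ring. }
  rewrite E1, Hf, H0, Hy in Hb by auto.
  replace (Csub (Cmul (ratio f) C0) C1) with (Ropp 1, 0) in Hb by (cgoal; ring).
  rewrite N1_real, Rabs_Ropp, Rabs_R1 in Hb.
  assert (K * (2 * (1 / (4 * (K + 1)))) < 1).
  { replace (K * (2 * (1 / (4 * (K + 1))))) with (K / (2 * (K + 1))) by (field; lra).
    apply Rmult_lt_reg_r with (2 * (K + 1)); [lra|]. unfold Rdiv. rewrite Rmult_assoc, Rinv_l; lra. }
  lra.
Qed.

Lemma FD (c0 z y : vec n) : dense_orbit G z -> L y = C1 ->
  (forall f, G f -> L (vsub (apply f z) c0) = Cmul (ratio f) (L (vsub z c0))) ->
  L (vsub z c0) <> C0 -> closure_Lambda_is_C G.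
Proof.
  intros Hz Hy Hf H0 w0 eps Heps. set (b := L (vsub z c0)).
  pose proof (Cnorm_pos _ H0) as Hnb. fold b in Hnb.
  set (d := eps * Cnorm b / (2 * (K + 1))).
  assert (Hd : 0 < d) by (unfold d; apply Rdiv_lt_0_compat; [apply Rmult_lt_0_compat|]; lra).
  destruct (Hz (vadd c0 (vscale (Cmul w0 b) y)) d Hd) as [f [Gf Hc]].
  pose proof (L_near _ _ _ Hc) as Hb.
  assert (E1 : L (vsub (apply f z) (vadd c0 (vscale (Cmul w0 b) y)))
     = Csub (L (vsub (apply f z) c0)) (L (vscale (Cmul w0 b) y))).
  { rewrite <- L_sub. f_equal. unfold vsub; vgoal; ring. }
  rewrite E1, Hf, Lsc, Hy in Hb by auto. fold b in Hb.
  replace (Csub (Cmul (ratio f) b) (Cmul (Cmul w0 b) C1)) with (Cmul (Csub (ratio f) w0) b) in Hb by (cgoal; ring).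
  exists (ratio f); split; [exists f; auto|].
  pose proof (Cnorm_le_N1 (Cmul (Csub (ratio f) w0) b)). rewrite Cnorm_mul in H.
  assert (Cnorm (Csub (ratio f) w0) * Cnorm b < eps * Cnorm b).
  { eapply Rle_lt_trans; [|instantiate (1 := K * (2 * d))]. lra.
    unfold d. replace (K * (2 * (eps * Cnorm b / (2 * (K + 1))))) with ((eps * Cnorm b) * (K / (K + 1))) by (field; lra).
    rewrite <- (Rmult_1_r (eps * Cnorm b)) at 2. apply Rmult_lt_compat_l. apply Rmult_lt_0_compat; lra.
    apply Rmult_lt_reg_r with (K + 1); [lra|]. unfold Rdiv. rewrite Rmult_assoc, Rinv_l; lra. }
  apply Rmult_lt_reg_r with (Cnorm b); auto.
Qed.
End Lin.

Definition Dsp (c0 : vec n) (x : vec n) : Prop := E_G G (vadd c0 x).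

Lemma Dsp_props (c0 : vec n) : E_G G c0 ->
  Dsp c0 vzero /\ (forall x y, Dsp c0 x -> Dsp c0 y -> Dsp c0 (vadd x y)) /\
  (forall a x, Dsp c0 x -> Dsp c0 (vscale a x)).
Proof.
  intro Hc0. unfold Dsp. split; [|split].
  - replace (vadd c0 vzero) with c0 by (vgoal; ring). auto.
  - intros x y Hx Hy.
    pose proof (E_aff _ _ (1 / 2, 0) Hx Hy) as Hm.
    pose proof (E_aff _ _ (2, 0) Hc0 Hm) as Hm2.
    replace (vadd c0 (vadd x y)) with
      (vadd (vscale (Csub C1 (2, 0)) c0) (vscale (2, 0)
        (vadd (vscale (Csub C1 (1 / 2, 0)) (vadd c0 x)) (vscale (1 / 2, 0) (vadd c0 y))))).
    auto. vgoal; field.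
  - intros a x Hx. pose proof (E_aff _ _ a Hc0 Hx) as H.
    replace (vadd c0 (vscale a x)) with (vadd (vscale (Csub C1 a) c0) (vscale a (vadd c0 x))); auto.
    vgoal; ring.
Qed.

Lemma orbit_rel (f : aff n) (z c0 : vec n) :
  vsub (apply f z) c0 = vadd (vscale (ratio f) (vsub z c0)) (vsub (apply f c0) c0).
Proof. unfold vsub; vgoal; ring. Qed.

Lemma vadd_vsub (c0 y : vec n) : vadd c0 (vsub y c0) = y.
Proof. unfold vsub; vgoal; ring. Qed.

Lemma AC (Hb : LA_basis) (Ha : LA_annih) (Hf : LA_full) : nonabelian G -> has_dense_orbit G ->
  (forall z, E_G G z) \/ (affine_dim (E_G G) (n - 1) /\ closure_Lambda_is_C G).
Proof.
  intros Hna [z Hz].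
  destruct (center_exists Hna) as [f0 [c0 [Gf0 [Hf0 Hc0]]]].
  assert (Ec0 : E_G G c0) by (apply Gamma_E; exists f0; auto).
  destruct (Dsp_props c0 Ec0) as [D0 [Dadd Dsc]].
  destruct (Hb n (Dsp c0) D0 Dadd Dsc) as [k [v [Hkn [Hind [Hvin Hspan]]]]].
  assert (Dspan : forall c, Dsp c0 (vlin k c v)) by (intro c; apply vlin_in; auto).
  set (u := vsub z c0).
  assert (Dorb : forall f, G f -> Dsp c0 (vsub (apply f c0) c0)).
  { intros f Gf. unfold Dsp. rewrite vadd_vsub. apply E_inv; auto. }
  assert (Lkey : forall L, (forall x y, L (vadd x y) = Cadd (L x) (L y)) ->
      (forall a x, L (vscale a x) = Cmul a (L x)) -> (forall x, Dsp c0 x -> L x = C0) ->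
      forall f, G f -> L (vsub (apply f z) c0) = Cmul (ratio f) (L (vsub z c0))).
  { intros L La Ls LD f Gf. rewrite orbit_rel, La, Ls, (LD _ (Dorb f Gf)). cgoal; ring. }
  assert (LvD : forall L, (forall x y, L (vadd x y) = Cadd (L x) (L y)) ->
      (forall a x, L (vscale a x) = Cmul a (L x)) -> (forall j, (j < k)%nat -> L (v j) = C0) ->
      forall x, Dsp c0 x -> L x = C0).
  { intros L La Ls Lv x Hx. destruct (Hspan x Hx) as [c ->]. apply L_vlin; auto. }
  destruct (Nat.eq_dec k n) as [Hk|Hk].
  - left. intro z'. subst k. destruct (Hf n v Hind (vsub z' c0)) as [c Hc].
    rewrite <- (vadd_vsub c0 z'). rewrite Hc. apply Dspan.
  - destruct (Ha n k v ltac:(lia)) as [L [La [Ls [Lv [[y Hy] [K [HK LK]]]]]]].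
    assert (LD := LvD L La Ls Lv).
    destruct (classic (L u = C0)) as [Hu|Hu].
    { exfalso. apply (FC L La Ls K HK LK c0 z y Hz Hy (Lkey L La Ls LD) Hu). }
    right. split.
    2: { apply (FD L La Ls K HK LK c0 z y Hz Hy (Lkey L La Ls LD) Hu). }
    destruct (Nat.eq_dec k (n - 1)) as [Hk1|Hk1].
    + rewrite <- Hk1. exists c0, v. split; auto. intro z'. split.
      * intro Hz'. assert (Dsp c0 (vsub z' c0)) by (unfold Dsp; rewrite vadd_vsub; auto).
        destruct (Hspan _ H) as [c Hc]. exists c. rewrite <- Hc, vadd_vsub; auto.
      * intros [c ->]. apply Dspan.
    + exfalso.
      set (v' := fun j => if Nat.eqb j k then u else v j).
      destruct (Ha n (S k) v' ltac:(lia)) as [L' [La' [Ls' [Lv' [[y' Hy'] [K' [HK' LK']]]]]]].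
      assert (LD' : forall x, Dsp c0 x -> L' x = C0).
      { apply LvD; auto. intros j hj. pose proof (Lv' j ltac:(lia)). unfold v' in H.
        destruct (Nat.eqb_spec j k); [lia|auto]. }
      assert (Hu' : L' u = C0).
      { pose proof (Lv' k ltac:(lia)). unfold v' in H. rewrite Nat.eqb_refl in H; auto. }
      apply (FC L' La' Ls' K' HK' LK' c0 z y' Hz Hy' (Lkey L' La' Ls' LD') Hu').
Qed.

Lemma Mul_dense_Lambda : closure_Lambda_is_C G ->
  forall w eps, 0 < eps -> exists r, Mul r /\ N1 (Csub r w) < eps.
Proof. intros HL w eps He. destruct (HL w (eps / 2)) as [l [[f [Gf <-]] Hl]]; [lra|].
  exists (ratio f); split. apply Mul_ratio; auto. pose proof (N1_le_Cnorm (Csub (ratio f) w)); lra. Qed.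

Lemma trans_aff (t : vec n) : Tr t -> exists h, G h /\ forall x, apply h x = vadd x t.
Proof. intros [h [Gh [rh th]]]. exists h; split; auto. intro x. unfold apply. rewrite rh, th. vgoal; ring. Qed.

Lemma CB (Hf : LA_full) : nonabelian G -> affine_dim (E_G G) (n - 1) -> closure_Lambda_is_C G ->
  forall z, ~ E_G G z -> dense_orbit G z.
Proof.
  intros Hna [p [v [Hind Hsp]]] HL z Hz w eps Heps.
  destruct (center_exists Hna) as [f0 [c0 [Gf0 [Hf0 Hc0]]]].
  set (u := vsub z p).
  assert (Hnu : ~ exists c, u = vlin (n - 1) c v).
  { intros [c Hc]. apply Hz, Hsp. exists c. rewrite <- Hc. unfold u; vgoal; ring. }
  destruct (LA_span Hf n v u Hind Hnu (vsub w p)) as [c [mu Hw]].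
  set (e := vlin (n - 1) c v).
  assert (Ep : E_G G p). { apply Hsp. exists (fun _ => C0). rewrite vlin_zero. vgoal; ring. }
  assert (Epe : E_G G (vadd p e)) by (apply Hsp; exists c; auto).
  destruct (vbound u) as [Ku [HKu HbKu]].
  destruct (HL mu (eps / (4 * Ku))) as [l [[g [Gg Hgl]] Hl]].
  { apply Rdiv_lt_0_compat; lra. }
  set (s := vsub (vadd p e) (apply g p)).
  assert (Hs : Sp s).
  { replace s with (vsub (vsub (vadd p e) c0) (vsub (apply g p) c0)) by (unfold s, vsub; vgoal; ring).
    apply Sp_sub; apply (E_sub_S f0 c0); auto. apply E_inv; auto. }
  destruct (Tr_dense_Sp (Mul_dense_Lambda HL) s Hs (eps / 2)) as [t [Ht Hts]]; [lra|].
  destruct (trans_aff t Ht) as [h [Gh Hh]].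
  exists (acomp h g). split. apply G_comp; auto.
  intro i. rewrite apply_acomp, Hh.
  assert (Hwi := f_equal (fun x => x i) Hw). cbv beta in Hwi.
  assert (Hid : Csub (vadd (apply g z) t i) (w i) = Cadd (Cmul (Csub (ratio g) mu) (u i)) (Csub (t i) (s i))).
  { unfold u, s, e in *. rewrite !vsub_eq in *. unfold vadd, apply, vscale in *.
    pose proof (f_equal fst Hwi); pose proof (f_equal snd Hwi).
    unfold Csub, Cadd, Copp, Cmul in *; simpl in *. apply Ceq; simpl; lra. }
  rewrite Hid, Hgl. eapply Rle_lt_trans; [apply Cnorm_le_N1|].
  eapply Rle_lt_trans; [apply N1_add|]. eapply Rle_lt_trans; [apply Rplus_le_compat_r, N1_mul|].
  pose proof (Hts i). pose proof (HbKu i).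
  pose proof (N1_le_Cnorm (Csub l mu)). pose proof (N1_nonneg (u i)). pose proof (N1_nonneg (Csub l mu)).
  assert (N1 (Csub l mu) * N1 (u i) <= (2 * (eps / (4 * Ku))) * Ku).
  { apply Rmult_le_compat; auto. lra. }
  replace (2 * (eps / (4 * Ku)) * Ku) with (eps / 2) in H4 by (field; apply Rgt_not_eq; lra).
  lra.
Qed.

Lemma BA : nonabelian G -> ~ Lambda_subset_R G -> ~ subset_SR G ->
  (forall z, ~ E_G G z -> dense_orbit G z) -> has_dense_orbit G.
Proof.
  intros Hna HL HS HB. destruct (classic (forall z, E_G G z)) as [Hall|Hn].
  - destruct (center_exists Hna) as [f0 [c0 [Gf0 [Hf0 Hc0]]]].
    exists c0. intros w eps Heps.
    assert (Hs : Sp (vsub w c0)) by (apply (E_sub_S f0 c0); auto).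
    destruct (Tr_dense_Sp (Mul_dense_hyp HL HS) _ Hs eps Heps) as [t [Ht Hts]].
    destruct (trans_aff t Ht) as [h [Gh Hh]].
    exists h; split; auto. intro i. rewrite Hh.
    replace (Csub (vadd c0 t i) (w i)) with (Csub (t i) (vsub w c0 i)) by (rewrite vsub_eq; unfold vadd; cgoal; ring).
    eapply Rle_lt_trans; [apply Cnorm_le_N1|]. apply Hts.
  - apply not_all_ex_not in Hn. destruct Hn as [z Hz]. exists z; auto.
Qed.

Theorem main_LA (Hb : LA_basis) (Ha : LA_annih) (Hf : LA_full) :
  nonabelian G -> ~ Lambda_subset_R G -> ~ subset_SR G ->
  (has_dense_orbit G <-> (forall z : vec n, ~ E_G G z -> dense_orbit G z)) /\
  ((forall z : vec n, ~ E_G G z -> dense_orbit G z) <->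
     ((forall z : vec n, E_G G z) \/
      (affine_dim (E_G G) (n - 1) /\ closure_Lambda_is_C G))).
Proof.
  intros Hna HL HS.
  assert (CB' : (forall z, E_G G z) \/ (affine_dim (E_G G) (n - 1) /\ closure_Lambda_is_C G) ->
     forall z, ~ E_G G z -> dense_orbit G z).
  { intros [Hall|[Hd Hc]] z Hz. exfalso; auto. apply CB; auto. }
  split; split; intro H.
  - apply CB'. apply AC; auto.
  - apply BA; auto.
  - apply AC; auto. apply BA; auto.
  - apply CB'; auto.
Qed.
End Grp.

From HB Require Import structures.
From mathcomp Require Import all_boot all_order all_algebra.
Import GRing.Theory.

Definition Ceqb (x y : C) : bool := if excluded_middle_informative (x = y) then true else false.
Lemma Ceqb_axiom : Equality.axiom Ceqb.
Proof. move=> x y; rewrite /Ceqb; case: excluded_middle_informative => h; constructor; done. Qed.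
HB.instance Definition _ := hasDecEq.Build C Ceqb_axiom.

Definition Cfind (P : pred C) (k : nat) : option C :=
  match excluded_middle_informative (exists x, P x) with
  | left h => Some (proj1_sig (constructive_indefinite_description _ h))
  | right _ => None end.
Lemma Cfind_correct P k x : Cfind P k = Some x -> P x.
Proof. rewrite /Cfind; case: excluded_middle_informative => // h [<-].
  exact: proj2_sig (constructive_indefinite_description _ h). Qed.
Lemma Cfind_complete (P : pred C) : (exists x, P x) -> exists k, Cfind P k.
Proof. move=> h; exists 0%N; rewrite /Cfind; case: excluded_middle_informative => //. Qed.
Lemma Cfind_ext (P Q : pred C) : P =1 Q -> Cfind P =1 Cfind Q.
Proof. move=> h; have -> : P = Q by apply: functional_extensionality. by []. Qed.
HB.instance Definition _ := hasChoice.Build C Cfind_correct Cfind_complete Cfind_ext.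

Lemma C_addA : associative Cadd. Proof. move=> x y z; cgoal; ring. Qed.
Lemma C_addC : commutative Cadd. Proof. move=> x y; cgoal; ring. Qed.
Lemma C_add0 : left_id C0 Cadd. Proof. move=> x; cgoal; ring. Qed.
Lemma C_addN : left_inverse C0 Copp Cadd. Proof. move=> x; cgoal; ring. Qed.
HB.instance Definition _ := GRing.isZmodule.Build C C_addA C_addC C_add0 C_addN.

Lemma C_mulA : associative Cmul. Proof. move=> x y z; cgoal; ring. Qed.
Lemma C_mulC : commutative Cmul. Proof. move=> x y; cgoal; ring. Qed.
Lemma C_mul1 : left_id C1 Cmul. Proof. move=> x; cgoal; ring. Qed.
Lemma C_mulD : left_distributive Cmul Cadd. Proof. move=> x y z; cgoal; ring. Qed.
Lemma C_1n0 : C1 != C0.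
Proof. apply/eqP => h. have h1 := f_equal fst h. exact: R1_neq_R0 h1. Qed.
HB.instance Definition _ := GRing.Zmodule_isComNzRing.Build C C_mulA C_mulC C_mul1 C_mulD C_1n0.

Lemma C_mulV (x : C) : x != 0%R -> (Cinv x * x)%R = 1%R.
Proof. move/eqP => h. exact: Cmul_inv_l. Qed.
Lemma C_inv0 : Cinv 0%R = 0%R.
Proof. cgoal; rewrite /Rdiv; ring. Qed.
HB.instance Definition _ := GRing.ComNzRing_isField.Build C C_mulV C_inv0.

Check (C : fieldType).
Lemma Cadd_r (x y : C) : (x + y)%R = Cadd x y. Proof. by []. Qed.
Lemma Cmul_r (x y : C) : (x * y)%R = Cmul x y. Proof. by []. Qed.
Lemma C0_r : (0 : C)%R = C0. Proof. by []. Qed.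

Set Implicit Arguments.
Section Bridge.
Variable n : nat.
Local Open Scope ring_scope.

Definition ord_of (i : idx n) : 'I_n := Ordinal (introT ltP (proj2_sig i)).
Definition idx_of (j : 'I_n) : idx n := exist _ (nat_of_ord j) (elimT ltP (ltn_ord j)).
Lemma idx_ord i : idx_of (ord_of i) = i.
Proof. case: i => j hj; rewrite /idx_of /ord_of /=; congr exist; exact: proof_irrelevance. Qed.
Lemma ord_idx j : ord_of (idx_of j) = j.
Proof. by apply: val_inj. Qed.

Definition ofv (x : vec n) : 'rV[C]_n := \row_j x (idx_of j).
Definition tov (r : 'rV[C]_n) : vec n := fun i => r 0 (ord_of i).
Lemma tov_ofv x : tov (ofv x) = x.
Proof. apply: functional_extensionality => i; rewrite /tov /ofv mxE idx_ord. by []. Qed.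
Lemma ofv_tov r : ofv (tov r) = r.
Proof. apply/rowP => j; rewrite /tov /ofv mxE ord_idx. by []. Qed.
Lemma ofv_inj x y : ofv x = ofv y -> x = y.
Proof. by move=> h; rewrite -(tov_ofv x) h tov_ofv. Qed.
Lemma ofv_add x y : ofv (vadd x y) = ofv x + ofv y.
Proof. by apply/rowP => j; rewrite !mxE. Qed.
Lemma ofv_scale a x : ofv (vscale a x) = a *: ofv x.
Proof. by apply/rowP => j; rewrite !mxE. Qed.
Lemma ofv_zero : ofv vzero = 0.
Proof. by apply/rowP => j; rewrite !mxE. Qed.

Lemma ofv_vlin k c v : ofv (vlin k c v) = \sum_(j < k) c j *: ofv (v j).
Proof. elim: k => [|k IH] /=; first by rewrite big_ord0 ofv_zero.
  by rewrite big_ord_recr /= ofv_add IH ofv_scale. Qed.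

Definition Vm (k : nat) (v : nat -> vec n) : 'M[C]_(k, n) := \matrix_(j < k, i < n) ofv (v j) 0 i.
Lemma row_Vm k v (o : 'I_k) : row o (Vm k v) = ofv (v o).
Proof. by apply/rowP => i; rewrite !mxE. Qed.

Definition nthc k (a : 'rV[C]_k) (j : nat) : C :=
  match @insub nat (fun j => j < k)%N _ j with Some o => a 0 o | None => 0 end.
Arguments nthc {k}.
Lemma nthc_val k (a : 'rV[C]_k) (o : 'I_k) : nthc a o = a 0 o.
Proof. by rewrite /nthc valK. Qed.

Lemma ofv_vlin_nthc k (a : 'rV[C]_k) v : ofv (vlin k (nthc a) v) = a *m Vm k v.
Proof. rewrite ofv_vlin mulmx_sum_row. apply: eq_bigr => o _. by rewrite nthc_val row_Vm. Qed.

Lemma free_indep k v : row_free (Vm k v) -> lin_indep k v.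
Proof.
  move=> hf c hc j hj.
  have h1 : (\row_(o < k) c o) *m Vm k v = 0 *m Vm k v.
  { rewrite mul0mx -ofv_zero -hc ofv_vlin mulmx_sum_row. apply: eq_bigr => o _.
    by rewrite row_Vm mxE. }
  have h2 := row_free_inj hf h1.
  have hj' : (j < k)%N by apply/ltP.
  have := congr1 (fun r : 'rV_k => r 0 (Ordinal hj')) h2. by rewrite !mxE.
Qed.

Lemma indep_free k v : lin_indep k v -> row_free (Vm k v).
Proof.
  move=> hi. apply: contraT => hnf.
  have hk : kermx (Vm k v) != 0.
  { rewrite -mxrank_eq0 mxrank_ker. rewrite /row_free in hnf.
    have := rank_leq_row (Vm k v). move: hnf. rewrite subn_eq0. move=> /eqP h1 h2.
    apply/negP => h3. apply: h1. apply/eqP. rewrite eqn_leq h2. done. }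
  have [o ho] : exists o, row o (kermx (Vm k v)) != 0.
  { apply: NNPP => h. move/negP: hk; apply. apply/eqP/row_matrixP => o. rewrite row0.
    apply/eqP; apply: contraT => h'. exfalso. apply: h. by exists o. }
  set a := row o (kermx (Vm k v)) in ho.
  have ha : a *m Vm k v = 0 by apply/sub_kermxP; exact: row_sub.
  have hv : vlin k (nthc a) v = vzero.
  { apply: ofv_inj. by rewrite ofv_vlin_nthc ha ofv_zero. }
  exfalso; move/negP: ho; apply. apply/eqP/rowP => j. transitivity (nthc a j); first by rewrite nthc_val. rewrite mxE.
  have hj : (nat_of_ord j < k)%coq_nat by apply/ltP; exact: ltn_ord.
  exact: (hi _ hv _ hj).
Qed.

End Bridge.

Local Open Scope ring_scope.

Lemma tov_zero n : tov (0 : 'rV[C]_n) = vzero.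
Proof. apply: functional_extensionality => i. by rewrite /tov mxE. Qed.
Lemma tov_add n (x y : 'rV[C]_n) : tov (x + y) = vadd (tov x) (tov y).
Proof. apply: functional_extensionality => i. by rewrite /tov mxE. Qed.
Lemma tov_scale n a (x : 'rV[C]_n) : tov (a *: x) = vscale a (tov x).
Proof. apply: functional_extensionality => i. by rewrite /tov mxE. Qed.

Lemma LA_full_pf : LA_full.
Proof.
  move=> n v hi w. have hf := indep_free hi.
  have hfull : row_full (Vm n v) by rewrite row_full_unit -row_free_unit.
  have : (ofv w <= Vm n v)%MS by apply: submx_full.
  case/submxP => a ha. exists (nthc a). apply: ofv_inj. by rewrite ofv_vlin_nthc.
Qed.

Lemma N1_sum_bound n (s : seq 'I_n) (x m : 'I_n -> C) e :
  (forall i, Rle (N1 (x i)) e) ->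
  Rle (N1 (\sum_(i <- s) x i * m i)) (Rmult (foldr (fun i r => Rplus (N1 (m i)) r) R0 s) e).
Proof.
  move=> hx. elim: s => [|i s IH].
  - rewrite big_nil /=. rewrite /N1 /=. rewrite Rabs_R0. apply: Req_le. ring.
  - rewrite big_cons /=. eapply Rle_trans; first exact: N1_add.
    eapply Rle_trans; first exact: Rplus_le_compat_r (N1_mul _ _).
    have h1 : Rle (Rmult (N1 (x i)) (N1 (m i))) (Rmult e (N1 (m i))).
    { apply: Rmult_le_compat_r; [exact: N1_nonneg | exact: hx]. }
    have h2 := Rplus_le_compat _ _ _ _ h1 IH.
    eapply Rle_trans; first exact: h2. apply: Req_le. ring.
Qed.
Lemma foldr_nonneg n (s : seq 'I_n) (m : 'I_n -> C) : Rle R0 (foldr (fun i r => Rplus (N1 (m i)) r) R0 s).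
Proof. elim: s => [|i s IH] /=; first exact: Rle_refl.
  have := N1_nonneg (m i). move=> h. apply: Rplus_le_le_0_compat => //. Qed.

Lemma LA_annih_pf : LA_annih.
Proof.
  move=> n k v hk. set V := Vm k v.
  have hmul := mulmx_coker V. have hrk := mxrank_coker V.
  move: (cokermx V) hmul hrk => M hmul hrk.
  have hM : M != 0.
  { rewrite -mxrank_eq0 hrk. have h := rank_leq_row V. move/ltP: hk => hk'.
    rewrite subn_eq0 -ltnNge. exact: leq_ltn_trans h hk'. }
  have [i0 [j0 hij]] : exists i0 j0, M i0 j0 != 0.
  { apply: NNPP => h. move/negP: hM; apply. apply/eqP/matrixP => i j. rewrite [in RHS]mxE.
    apply/eqP; apply: contraT => h'. exfalso. apply: h. by exists i, j. }
  exists (fun x => (ofv x *m M) 0 j0). split; [|split; [|split; [|split]]].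
  - move=> x y; rewrite ofv_add mulmxDl mxE. reflexivity.
  - move=> a x; rewrite ofv_scale -scalemxAl mxE. reflexivity.
  - move=> j hj. have hj' : (j < k)%N by apply/ltP.
    have h := row_Vm v (Ordinal hj'). simpl in h. rewrite -h -row_mul hmul row0 mxE. reflexivity.
  - exists (tov ((M i0 j0)^-1 *: delta_mx 0 i0)). rewrite ofv_tov -scalemxAl -rowE mxE mxE mulVf //.
  - exists (foldr (fun i r => Rplus (N1 (M i j0)) r) R0 (index_enum 'I_n)). split; first exact: foldr_nonneg.
    move=> w e hw. rewrite mxE. apply: N1_sum_bound => i. rewrite mxE. exact: hw.
Qed.

Definition pb (P : Prop) : bool := if excluded_middle_informative P then true else false.
Lemma pbP (P : Prop) : reflect P (pb P).
Proof. rewrite /pb; case: excluded_middle_informative => h; constructor; done. Qed.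

Lemma LA_basis_pf : LA_basis.
Proof.
  move=> n D D0 Dadd Dsc.
  have Dsum : forall m (B : 'M[C]_(m, n)), (forall i, D (tov (row i B))) ->
      forall y, (y <= B)%MS -> D (tov y).
  { move=> m B hB y /submxP [a ->]. rewrite mulmx_sum_row.
    apply: (big_ind (fun r => D (tov r))).
    - by rewrite tov_zero.
    - move=> x1 x2 h1 h2. rewrite tov_add. exact: Dadd.
    - move=> i _. rewrite tov_scale. exact: Dsc. }
  set Pb := fun r => pb (exists m (B : 'M[C]_(m, n)), (forall i, D (tov (row i B))) /\ \rank B = r).
  have ex0 : exists r, Pb r.
  { exists 0%N. apply/pbP. exists 0%N, (0 : 'M[C]_(0, n)). split; first by case.
    apply/eqP; rewrite -leqn0. exact: rank_leq_row. }
  have bnd : forall r, Pb r -> (r <= n)%N.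
  { move=> r /pbP [m [B [_ <-]]]. exact: rank_leq_col. }
  case: (ex_maxnP ex0 bnd) => r0 /pbP [m [B [hB hr0]]] hmax.
  have hspan : forall x, D x -> (ofv x <= B)%MS.
  { move=> x hx. apply: contraT => hnx. exfalso.
    set B' := col_mx B (ofv x).
    have hB' : forall i, D (tov (row i B')).
    { move=> i. case: (splitP i) => j hj.
      - have -> : i = lshift 1 j by apply: val_inj.
        rewrite /B' rowKu. exact: hB.
      - have -> : i = rshift m j by apply: val_inj.
        rewrite /B' rowKd row_id tov_ofv. exact: hx. }
    have hlt : (B < B')%MS.
    { rewrite ltmxE. apply/andP; split.
      - rewrite /B' -addsmxE. exact: addsmxSl.
      - apply/negP => h. move/negP: hnx; apply. apply: submx_trans h.
        rewrite /B' -addsmxE. exact: addsmxSr. }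
    have hr : (\rank B < \rank B')%N by rewrite ltmxErank in hlt; case/andP: hlt.
    have := hmax (\rank B'). rewrite hr0 in hr.
    have hP : Pb (\rank B') by apply/pbP; exists (m + 1)%N, B'.
    move=> /(_ hP) h. by rewrite leqNgt hr in h. }
  set Bb := row_base B.
  set v := fun j => tov (match @insub nat (fun j => j < \rank B)%N _ j with Some o => row o Bb | None => 0 end).
  have hV : Vm (\rank B) v = Bb.
  { apply/row_matrixP => o. rewrite row_Vm /v valK. exact: ofv_tov. }
  exists (\rank B), v. split; [|split; [|split]].
  - apply/leP. exact: rank_leq_col.
  - apply: free_indep. rewrite hV. exact: row_base_free.
  - move=> j hj. have hj' : (j < \rank B)%N by apply/ltP.
    have -> : j = nat_of_ord (Ordinal hj') by []. rewrite /v valK. apply: (Dsum _ B hB). rewrite -(eq_row_base B). exact: row_sub.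
  - move=> x hx. have := hspan x hx. rewrite -(eq_row_base B) -/Bb -hV.
    case/submxP => a ha. exists (nthc a). apply: ofv_inj. by rewrite ofv_vlin_nthc.
Qed.

Close Scope ring_scope.
Open Scope R_scope.

Theorem corollary1p4 (n : nat) (G : aff n -> Prop) :
  is_subgroup G -> nonabelian G -> ~ Lambda_subset_R G -> ~ subset_SR G ->
  (has_dense_orbit G <-> (forall z : vec n, ~ E_G G z -> dense_orbit G z)) /\
  ((forall z : vec n, ~ E_G G z -> dense_orbit G z) <->
     ((forall z : vec n, E_G G z) \/
      (affine_dim (E_G G) (n - 1) /\ closure_Lambda_is_C G))).
Proof.
  intros HG. exact (main_LA n G HG LA_basis_pf LA_annih_pf LA_full_pf).
Qed.
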